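(* Let $\mathcal{N}$ be any set of arbitrary 2D nodes over an $N\times M$ matrix, and let $B\mapsto S_U(B)$ be any fixed assignment, to each submatrix $B$, of a set $S_U(B)\subseteq\mathcal{N}$ whose union equals $B$. For a submatrix $B$, let the set of nodes visited by the update on $B$ be $S_U(B)\cup\{m\in\mathcal{N}: m\cap n\neq\emptyset \text{ for some } n\in S_U(B),\ \text{and } m\not\subseteq n \text{ for every } n\in S_U(B)\}$. Then there exists a submatrix $B$ for which the update on $B$ visits at least $\frac{NM}{N+M}$ nodes.
   Context: The matrix has coordinate set $G=\{0,\dots,N-1\}\times\{0,\dots,M-1\}$; a submatrix $[x_0,x_1][y_0,y_1]$ is the set of $(x,y)$ with $x_0\le x\le x_1$, $y_0\le y\le y_1$. A set of arbitrary 2D nodes is a family $\mathcal{N}$ of nonempty subsets of $G$ (nodes; they need not be submatrices) such that no two nodes are the same subset and for every coordinate $(x,y)$ the singleton $\{(x,y)\}$ is a node. (In the associated update algorithm, the lazy values of the nodes of $S_U(B)$ are changed and the non-lazy values of the other visited nodes are recomputed.) *)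

(* Defs.v *)
From HB Require Import structures.
From mathcomp Require Import all_boot all_order all_algebra.
Set Implicit Arguments. Unset Strict Implicit. Unset Printing Implicit Defensive.
Import Order.TTheory GRing.Theory Num.Theory.

Definition mxcoord (N M : nat) : finType := ('I_N * 'I_M)%type.

Definition submx_set (N M x0 x1 y0 y1 : nat) : {set mxcoord N M} :=
  [set p : mxcoord N M | (x0 <= p.1 <= x1) && (y0 <= p.2 <= y1)].

Definition is_submatrix (N M : nat) (B : {set mxcoord N M}) : Prop :=
  exists x0 x1 y0 y1 : nat,
    [/\ x0 <= x1 < N, y0 <= y1 < M & B = submx_set N M x0 x1 y0 y1].

Definition arbitrary_2D_nodes (N M : nat) (nodes : {set {set mxcoord N M}}) : Prop :=
  set0 \notin nodes /\ forall p : mxcoord N M, [set p] \in nodes.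

Definition visited (N M : nat) (nodes S : {set {set mxcoord N M}}) :
  {set {set mxcoord N M}} :=
  S :|: [set m in nodes | [exists n in S, m :&: n != set0] &&
                          [forall n in S, ~~ (m \subset n)]].

(* Main.v *)
Require Import Defs.
From HB Require Import structures.
From mathcomp Require Import all_boot all_order all_algebra.
Import Order.TTheory GRing.Theory Num.Theory.
Set Implicit Arguments. Unset Strict Implicit. Unset Printing Implicit Defensive.

Lemma cover_sub (T : finType) (P : {set {set T}}) (B c : {set T}) :
  cover P = B -> c \in P -> c \subset B.
Proof. by move=> <- cP; apply: bigcup_sup. Qed.

Lemma in_cover (T : finType) (P : {set {set T}}) (B : {set T}) p :
  cover P = B -> p \in B -> exists2 c, c \in P & p \in c.
Proof. by move=> <- /bigcupP[c cP pc]; exists c. Qed.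

Definition Rw N M (i : 'I_N) := submx_set N M i i 0 M.-1.
Definition Cl N M (j : 'I_M) := submx_set N M 0 N.-1 j j.

Lemma Rw_sub N M i : (0 < M)%N -> is_submatrix (@Rw N M i).
Proof.
move=> hM; exists i, i, 0, M.-1; split=> //; first by rewrite leqnn ltn_ord.
by rewrite leq0n /= prednK.
Qed.

Lemma Cl_sub N M j : (0 < N)%N -> is_submatrix (@Cl N M j).
Proof.
move=> hN; exists 0, N.-1, j, j; split=> //; last by rewrite leqnn ltn_ord.
by rewrite leq0n /= prednK.
Qed.

Lemma in_Rw N M i (p : mxcoord N M) : (p \in @Rw N M i) = (p.1 == i).
Proof.
rewrite inE /= -eqn_leq; case: p => [a b] /=.
have hb : (b <= M.-1) = true by rewrite -ltnS prednK ?ltn_ord // (leq_ltn_trans (leq0n b) (ltn_ord b)).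
by rewrite hb andbT eq_sym.
Qed.

Lemma in_Cl N M j (p : mxcoord N M) : (p \in @Cl N M j) = (p.2 == j).
Proof.
rewrite inE /= -eqn_leq; case: p => [a b] /=.
have ha : (a <= N.-1) = true by rewrite -ltnS prednK ?ltn_ord // (leq_ltn_trans (leq0n a) (ltn_ord a)).
by rewrite ha eq_sym.
Qed.

Lemma col_bound N M (nodes : {set {set mxcoord N M}})
  (S_U : {set mxcoord N M} -> {set {set mxcoord N M}}) (j : 'I_M) :
  #|[set i : 'I_N | [set ((i, j) : mxcoord N M)] \in S_U (@Cl N M j)]|
    <= #|visited nodes (S_U (@Cl N M j))|.
Proof.
set A := [set i | _].
have inj : injective (fun i : 'I_N => [set ((i, j) : mxcoord N M)]).
  by move=> i i' /setP /(_ (i, j)); rewrite !inE eqxx => /esym /eqP [].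
rewrite -(card_imset A inj); apply: subset_leq_card.
apply/subsetP => _ /imsetP[i iA ->]; rewrite inE; apply/orP; left.
by move: iA; rewrite inE.
Qed.

Lemma row_bound N M (nodes : {set {set mxcoord N M}})
  (S_U : {set mxcoord N M} -> {set {set mxcoord N M}})
  (HS_sub : forall B, is_submatrix B -> S_U B \subset nodes)
  (HS_cover : forall B, is_submatrix B -> cover (S_U B) = B)
  (hN : (0 < N)%N) (hM : (0 < M)%N) (i : 'I_N) :
  #|[set j : 'I_M | [set ((i, j) : mxcoord N M)] \notin S_U (@Cl N M j)]|
    <= #|visited nodes (S_U (@Rw N M i))|.
Proof.
set A := [set j | _].
pose f (j : 'I_M) := odflt set0 [pick c in S_U (@Cl N M j) | ((i, j) : mxcoord N M) \in c].
have fP : forall j, [/\ f j \in S_U (@Cl N M j), ((i, j) : mxcoord N M) \in f j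
     & f j \subset @Cl N M j].
  move=> j; rewrite /f; case: pickP => [c /andP[cS pc]|H] /=.
    by split=> //; apply: (cover_sub (HS_cover _ (@Cl_sub N M j hN))).
  have pin : ((i, j) : mxcoord N M) \in @Cl N M j by rewrite in_Cl.
  have [c cS pc] := in_cover (HS_cover _ (@Cl_sub N M j hN)) pin.
  by move: (H c); rewrite cS pc.
have inj : {in A &, injective f}.
  move=> j j' _ _ e; have [_ pj _] := fP j; have [_ _ sj'] := fP j'.
  by move: pj; rewrite e => /(subsetP sj'); rewrite in_Cl /= => /eqP.
rewrite -(card_in_imset inj); apply: subset_leq_card.
apply/subsetP => _ /imsetP[j jA ->]; rewrite inE; apply/orP; right.
have [fS pf sf] := fP j.
have pin : ((i, j) : mxcoord N M) \in @Rw N M i by rewrite in_Rw.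
have [n nS pn] := in_cover (HS_cover _ (@Rw_sub N M i hM)) pin.
rewrite inE (subsetP (HS_sub _ (@Cl_sub N M j hN)) _ fS) /=; apply/andP; split.
  apply/existsP; exists n; rewrite nS /=; apply/set0Pn; exists (i, j).
  by rewrite inE pf pn.
apply/forallP => n'; apply/implyP => n'S; apply/negP => sub.
have sn' := cover_sub (HS_cover _ (@Rw_sub N M i hM)) n'S.
move: jA; rewrite inE => /negP; apply.
suff e : f j = [set ((i, j) : mxcoord N M)] by rewrite -e.
apply/setP => q; rewrite inE; apply/idP/eqP => [qf|->//].
have := subsetP sf _ qf; have := subsetP sn' _ (subsetP sub _ qf).
by rewrite in_Rw in_Cl; case: q {qf} => a b /= /eqP -> /eqP ->.
Qed.

Lemma card_sum (T : finType) (b : pred T) : #|[set x | b x]| = (\sum_x (b x : nat))%N.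
Proof.
rewrite -sum1_card big_mkcond /=; apply: eq_bigr => x _; rewrite inE; by case: (b x).
Qed.

From mathcomp Require Import zify.
Local Open Scope ring_scope.

Theorem theorem4 (N M : nat) (hN : (0 < N)%N) (hM : (0 < M)%N)
  (nodes : {set {set mxcoord N M}})
  (Hnodes : arbitrary_2D_nodes nodes)
  (S_U : {set mxcoord N M} -> {set {set mxcoord N M}})
  (HS_sub : forall B, is_submatrix B -> S_U B \subset nodes)
  (HS_cover : forall B, is_submatrix B -> cover (S_U B) = B) :
  exists B : {set mxcoord N M}, is_submatrix B /\
    ((N * M)%:R / (N + M)%:R : rat) <= (#|visited nodes (S_U B)|)%:R.
Proof.
have conv : forall v : nat, (N * M <= v * (N + M))%N ->
    ((N * M)%:R / (N + M)%:R : rat) <= v%:R.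
  move=> v h; rewrite ler_pdivrMr ?ltr0n ?addn_gt0 ?hN // -natrM ler_nat //.
pose v (i : 'I_N) := #|visited nodes (S_U (@Rw N M i))|.
pose w (j : 'I_M) := #|visited nodes (S_U (@Cl N M j))|.
case: (boolP ([exists i, (N * M <= v i * (N + M))%N] || [exists j, (N * M <= w j * (N + M))%N])).
  case/orP => /existsP[k hk].
    by exists (@Rw N M k); split; [exact: Rw_sub | exact: conv].
  by exists (@Cl N M k); split; [exact: Cl_sub | exact: conv].
rewrite negb_or => /andP[/existsPn hv /existsPn hw]; exfalso.
pose P (i : 'I_N) (j : 'I_M) := [set ((i, j) : mxcoord N M)] \in S_U (@Cl N M j).
have count : (N * M = \sum_i #|[set j | ~~ P i j]| + \sum_j #|[set i | P i j]|)%N.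
  under eq_bigr do rewrite card_sum.
  under [X in (_ + X)%N]eq_bigr do rewrite card_sum.
  rewrite [X in (_ + X)%N]exchange_big -big_split /=.
  rewrite (eq_bigr (fun _ => M)); last first.
    move=> i _; rewrite -big_split /= (eq_bigr (fun _ => 1%N)); last by move=> j _; case: (P i j).
    by rewrite sum1_card card_ord.
  by rewrite sum_nat_const card_ord.
have le1 : (\sum_i #|[set j | ~~ P i j]| <= \sum_i v i)%N.
  apply: leq_sum => i _; exact: row_bound.
have le2 : (\sum_j #|[set i | P i j]| <= \sum_j w j)%N.
  apply: leq_sum => j _; exact: col_bound.
have s1 : ((\sum_i v i) * (N + M) + N <= N * (N * M))%N.
  have : (\sum_i (v i * (N + M)).+1 <= \sum_(i < N) (N * M))%N.
    by apply: leq_sum => i _; rewrite ltnNge; exact: hv i.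
  under eq_bigr do rewrite -addn1.
  by rewrite big_split /= !sum_nat_const card_ord muln1 big_distrl.
have s2 : ((\sum_j w j) * (N + M) + M <= M * (N * M))%N.
  have : (\sum_j (w j * (N + M)).+1 <= \sum_(j < M) (N * M))%N.
    by apply: leq_sum => j _; rewrite ltnNge; exact: hw j.
  under eq_bigr do rewrite -addn1.
  by rewrite big_split /= !sum_nat_const card_ord muln1 big_distrl.
move: count le1 le2 s1 s2.
move: (\sum_i v i)%N (\sum_j w j)%N (\sum_i #|[set j | ~~ P i j]|)%N (\sum_j #|[set i | P i j]|)%N (N * M)%N => a b c d K.
nia.
Qed.
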